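(* Let $0<\varepsilon<1$ and $\Omega_\varepsilon=\{\lambda\in\mathbb C : |\mathrm{Re}\,\lambda|\le\varepsilon|\lambda|,\ \mathrm{Im}\,\lambda\le-\tfrac{1-\varepsilon}{2}\}$. Then there exists a constant $d>0$ and, for every $h\in\mathbb N$, a constant $C>0$ such that $$|\partial_\lambda^{\,h}\Gamma_\ell(\lambda)|\le C\,\ell^{d}\,(1+|\lambda|)^{-h-1}\qquad\text{for all }\ell\in\mathbb N^*=\{1,2,\dots\},\ \lambda\in\mathbb C\setminus\Omega_\varepsilon .$$
   Context: Let $m\ge2$ be an even integer and $k\ge1$ an integer, and set $Q=\frac m2+k$. Define $$\omega(r)=\tfrac14\cdot\tfrac m2\,(Q-1)\,\big(\sinh\tfrac r2\big)^{-2}+\tfrac k2\big(\tfrac k2-1\big)(\sinh r)^{-2}\qquad(r>0).$$ This function has an expansion $\omega(r)=\sum_{j\ge1}\omega_j e^{-jr}$ for $r>0$, with coefficients satisfying $\omega_j=O(j)$. The functions $\Gamma_\ell(\lambda)$, for $\ell\in\mathbb N$, are defined by the recurrence $$\Gamma_0=1,\qquad \ell\,(\ell-2i\lambda)\,\Gamma_\ell(\lambda)=\sum_{j=0}^{\ell-1}\omega_{\ell-j}\,\Gamma_j(\lambda)\qquad(\ell\ge1).$$ These are the coefficients in the expansion of the spherical function at infinity on a Damek–Ricci space: the poles of $\Gamma_\ell$ lie at $\lambda=-i\ell'/2$ for $\ell'\ge1$. *)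

(* Defs.v *)
From Stdlib Require Import Reals Lra Lia Arith List ClassicalEpsilon.
Import ListNotations.
Open Scope R_scope.

Definition Cplx : Type := (R * R)%type.
Definition Re (z : Cplx) : R := fst z.
Definition Im (z : Cplx) : R := snd z.
Definition C0 : Cplx := (0, 0).
Definition C1 : Cplx := (1, 0).
Definition RtoC (x : R) : Cplx := (x, 0).
Definition Ci : Cplx := (0, 1).
Definition Cadd (z w : Cplx) : Cplx := (Re z + Re w, Im z + Im w).
Definition Copp (z : Cplx) : Cplx := (- Re z, - Im z).
Definition Csub (z w : Cplx) : Cplx := Cadd z (Copp w).
Definition Cmul (z w : Cplx) : Cplx :=
  (Re z * Re w - Im z * Im w, Re z * Im w + Im z * Re w).
Definition Cnorm (z : Cplx) : R := sqrt (Re z * Re z + Im z * Im z).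
Definition Cinv (z : Cplx) : Cplx :=
  (Re z / (Re z * Re z + Im z * Im z), - Im z / (Re z * Re z + Im z * Im z)).
Definition Cdiv (z w : Cplx) : Cplx := Cmul z (Cinv w).

Definition has_cderiv (f : Cplx -> Cplx) (z l : Cplx) : Prop :=
  forall eps, 0 < eps -> exists delta, 0 < delta /\
    forall w, 0 < Cnorm w < delta ->
      Cnorm (Csub (Cdiv (Csub (f (Cadd z w)) (f z)) w) l) < eps.

(* the complex derivative (the limit, when it exists; it is unique) *)
Definition cderiv (f : Cplx -> Cplx) (z : Cplx) : Cplx :=
  epsilon (inhabits C0) (fun (l : Cplx) => has_cderiv f z l).

Fixpoint cderivn (h : nat) (f : Cplx -> Cplx) : Cplx -> Cplx :=
  match h with
  | O => f
  | S h' => cderiv (cderivn h' f)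
  end.

Definition Qdim (m k : nat) : R := INR m / 2 + INR k.
Definition omega_fun (m k : nat) (r : R) : R :=
  / 4 * (INR m / 2) * (Qdim m k - 1) * / (sinh (r / 2) ^ 2)
  + (INR k / 2) * (INR k / 2 - 1) * / (sinh r ^ 2).

Definition is_expansion (m k : nat) (om : nat -> R) : Prop :=
  forall r, 0 < r ->
    infinite_sum (fun n => om (S n) * exp (- INR (S n) * r)) (omega_fun m k r).

(* Gamma_list om lam n = [Gamma_0 lam; ...; Gamma_n lam], via
   Gamma_0 = 1,  l (l - 2 i lam) Gamma_l = sum_{j=0}^{l-1} om_{l-j} Gamma_j. *)
Fixpoint Gamma_list (om : nat -> R) (lam : Cplx) (n : nat) : list Cplx :=
  match n with
  | O => [C1]
  | S n' =>
      let prev := Gamma_list om lam n' in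
      let l := INR (S n') in
      let s := fold_right Cadd C0
                 (map (fun j => Cmul (RtoC (om (S n' - j)%nat)) (nth j prev C0))
                      (seq 0 (S n'))) in
      prev ++ [Cdiv s (Cmul (RtoC l) (Csub (RtoC l) (Cmul (RtoC 2) (Cmul Ci lam))))]
  end.

Definition Gamma (om : nat -> R) (l : nat) (lam : Cplx) : Cplx :=
  nth l (Gamma_list om lam l) C0.

Definition Omega (eps : R) (lam : Cplx) : Prop :=
  Rabs (Re lam) <= eps * Cnorm lam /\ Im lam <= - ((1 - eps) / 2).

(* Main.v *)
From Pilot Require Import Defs.
From Stdlib Require Import Reals Lra Lia Psatz Arith List Field ClassicalEpsilon.
Import ListNotations.
Import Pilot.Defs.
Open Scope R_scope.

Lemma Ceq (z w : Cplx) : Re z = Re w -> Im z = Im w -> z = w.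
Proof. destruct z, w; simpl; intros; subst; reflexivity. Qed.

Lemma Cring_th : ring_theory C0 C1 Cadd Cmul Csub Copp (@eq Cplx).
Proof.
  constructor; intros; apply Ceq; destruct x; try destruct y; try destruct z;
  unfold Cadd, Cmul, Csub, Copp, C0, C1, Re, Im; simpl; ring.
Qed.

Lemma Cfield_th : field_theory C0 C1 Cadd Cmul Csub Copp Cdiv Cinv (@eq Cplx).
Proof.
  constructor.
  - exact Cring_th.
  - unfold C0, C1; intro H; inversion H; lra.
  - reflexivity.
  - intros [a b] Hp. apply Ceq; unfold Cinv, Cmul, C1, Re, Im; simpl.
    + assert (a*a+b*b <> 0).
      { intro H0. apply Hp. assert (a = 0) by nra. assert (b = 0) by nra. subst. reflexivity. }
      field; auto.
    + assert (a*a+b*b <> 0).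
      { intro H0. apply Hp. assert (a = 0) by nra. assert (b = 0) by nra. subst. reflexivity. }
      field; auto.
Qed.

Add Field Cfield : Cfield_th.

Lemma RtoC_add a b : RtoC (a + b) = Cadd (RtoC a) (RtoC b).
Proof. apply Ceq; unfold RtoC, Cadd, Re, Im; simpl; ring. Qed.
Lemma RtoC_mul a b : RtoC (a * b) = Cmul (RtoC a) (RtoC b).
Proof. apply Ceq; unfold RtoC, Cmul, Re, Im; simpl; ring. Qed.
Lemma RtoC_0 : RtoC 0 = C0. Proof. reflexivity. Qed.
Lemma RtoC_1 : RtoC 1 = C1. Proof. reflexivity. Qed.

Lemma Cnorm_ge0 z : 0 <= Cnorm z.
Proof. apply sqrt_pos. Qed.

Lemma Cnorm_sq z : Cnorm z * Cnorm z = Re z * Re z + Im z * Im z.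
Proof. unfold Cnorm. apply sqrt_sqrt. nra. Qed.

Lemma Cnorm_mul z w : Cnorm (Cmul z w) = Cnorm z * Cnorm w.
Proof.
  unfold Cnorm. rewrite <- sqrt_mult by nra. f_equal.
  destruct z, w; unfold Cmul, Re, Im; simpl; ring.
Qed.

Lemma Cnorm_RtoC x : Cnorm (RtoC x) = Rabs x.
Proof. unfold Cnorm, RtoC, Re, Im; simpl. rewrite <- sqrt_Rsqr_abs. unfold Rsqr. f_equal; ring. Qed.

Lemma Cnorm_Re z : Rabs (Re z) <= Cnorm z.
Proof.
  unfold Cnorm. rewrite <- sqrt_Rsqr_abs. apply sqrt_le_1_alt. unfold Rsqr. nra.
Qed.
Lemma Cnorm_Im z : Rabs (Im z) <= Cnorm z.
Proof.
  unfold Cnorm. rewrite <- sqrt_Rsqr_abs. apply sqrt_le_1_alt. unfold Rsqr. nra.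
Qed.

Lemma Cnorm_le_sum z : Cnorm z <= Rabs (Re z) + Rabs (Im z).
Proof.
  unfold Cnorm. rewrite <- (sqrt_Rsqr (Rabs (Re z) + Rabs (Im z))).
  2: { pose proof (Rabs_pos (Re z)); pose proof (Rabs_pos (Im z)); lra. }
  apply sqrt_le_1_alt. unfold Rsqr.
  pose proof (Rabs_pos (Re z)); pose proof (Rabs_pos (Im z)).
  assert (Rabs (Re z) * Rabs (Re z) = Re z * Re z) by (rewrite <- Rabs_mult; apply Rabs_right; nra).
  assert (Rabs (Im z) * Rabs (Im z) = Im z * Im z) by (rewrite <- Rabs_mult; apply Rabs_right; nra).
  nra.
Qed.

Lemma Cnorm_triangle z w : Cnorm (Cadd z w) <= Cnorm z + Cnorm w.
Proof.
  pose proof (Cnorm_ge0 z); pose proof (Cnorm_ge0 w); pose proof (Cnorm_ge0 (Cadd z w)).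
  pose proof (Cnorm_sq z); pose proof (Cnorm_sq w); pose proof (Cnorm_sq (Cadd z w)).
  destruct z as [a b], w as [c d]. unfold Cadd, Re, Im in *; simpl in *.
  assert (a*c + b*d <= Cnorm (a,b) * Cnorm (c,d)).
  { assert ((a*c+b*d)^2 <= (Cnorm (a,b) * Cnorm (c,d))^2).
    { replace ((Cnorm (a,b) * Cnorm (c,d))^2) with ((Cnorm (a,b) * Cnorm (a,b)) * (Cnorm (c,d)*Cnorm (c,d))) by ring.
      rewrite H2, H3. pose proof (pow2_ge_0 (a*d-b*c)). nra. }
    assert (0 <= Cnorm (a,b) * Cnorm (c,d)) by (apply Rmult_le_pos; auto). nra. }
  nra.
Qed.

Lemma Cnorm_opp z : Cnorm (Copp z) = Cnorm z.
Proof. unfold Cnorm, Copp, Re, Im; simpl. f_equal; ring. Qed.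

Lemma Cnorm_sub_tri z w : Cnorm (Csub z w) <= Cnorm z + Cnorm w.
Proof. unfold Csub. rewrite <- (Cnorm_opp w). apply Cnorm_triangle. Qed.

Lemma Cnorm_eq0 z : Cnorm z = 0 -> z = C0.
Proof.
  intro H. pose proof (Cnorm_sq z). rewrite H in H0.
  apply Ceq; unfold C0, Re, Im in *; simpl; nra.
Qed.

Lemma Cnorm_C0 : Cnorm C0 = 0.
Proof. unfold Cnorm, C0, Re, Im; simpl. replace (0*0+0*0) with 0 by ring. apply sqrt_0. Qed.

Lemma Cnorm_pos z : z <> C0 -> 0 < Cnorm z.
Proof. intro H. destruct (Cnorm_ge0 z); auto. exfalso; apply H, Cnorm_eq0; auto. Qed.

Lemma Cnorm_inv z : z <> C0 -> Cnorm (Cinv z) = / Cnorm z.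
Proof.
  intro H. pose proof (Cnorm_pos z H).
  assert (E: Cmul (Cinv z) z = C1) by (field; auto).
  assert (Cnorm (Cinv z) * Cnorm z = 1).
  { rewrite <- Cnorm_mul, E. unfold Cnorm, C1, Re, Im; simpl. replace (1*1+0*0) with 1 by ring. apply sqrt_1. }
  field_simplify_eq; [|lra]. lra.
Qed.

Lemma Cnorm_div z w : w <> C0 -> Cnorm (Cdiv z w) = Cnorm z / Cnorm w.
Proof. intro H. unfold Cdiv. rewrite Cnorm_mul, Cnorm_inv; auto. Qed.

Definition dlin (f : Cplx -> Cplx) (z l : Cplx) : Prop :=
  forall e, 0 < e -> exists d, 0 < d /\ forall w, Cnorm w < d ->
    Cnorm (Csub (Csub (f (Cadd z w)) (f z)) (Cmul l w)) <= e * Cnorm w.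

Lemma Cnorm_pos_neq w : 0 < Cnorm w -> w <> C0.
Proof. intros H E; subst; rewrite Cnorm_C0 in H; lra. Qed.

Lemma dlin_has f z l : dlin f z l -> has_cderiv f z l.
Proof.
  intros H e He. destruct (H (e/2)) as [d [Hd Hw]]; [lra|].
  exists d; split; auto. intros w [H1 H2].
  pose proof (Cnorm_pos_neq w H1) as Hw0.
  replace (Csub (Cdiv (Csub (f (Cadd z w)) (f z)) w) l)
    with (Cdiv (Csub (Csub (f (Cadd z w)) (f z)) (Cmul l w)) w) by (field; auto).
  rewrite Cnorm_div by auto.
  specialize (Hw w H2). apply (Rmult_lt_reg_r (Cnorm w)); auto.
  unfold Rdiv. rewrite Rmult_assoc, Rinv_l by lra. nra.
Qed.

Lemma has_uniq f z l1 l2 : has_cderiv f z l1 -> has_cderiv f z l2 -> l1 = l2.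
Proof.
  intros H1 H2. destruct (Req_dec (Cnorm (Csub l1 l2)) 0) as [E|E].
  - apply Cnorm_eq0 in E. replace l1 with (Cadd (Csub l1 l2) l2) by ring. rewrite E; ring.
  - pose proof (Cnorm_ge0 (Csub l1 l2)).
    set (e := Cnorm (Csub l1 l2) / 2).
    destruct (H1 e) as [d1 [Hd1 P1]]; [unfold e; lra|].
    destruct (H2 e) as [d2 [Hd2 P2]]; [unfold e; lra|].
    set (w := RtoC (Rmin d1 d2 / 2)).
    assert (Hw : Cnorm w = Rmin d1 d2 / 2).
    { unfold w. rewrite Cnorm_RtoC. apply Rabs_right.
      unfold Rmin; destruct Rle_dec; lra. }
    assert (0 < Cnorm w < d1) by (rewrite Hw; unfold Rmin; destruct Rle_dec; lra).
    assert (0 < Cnorm w < d2) by (rewrite Hw; unfold Rmin; destruct Rle_dec; lra).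
    specialize (P1 w H0). specialize (P2 w H3).
    set (q := Cdiv (Csub (f (Cadd z w)) (f z)) w) in *.
    assert (Csub l1 l2 = Csub (Csub q l2) (Csub q l1)) by ring.
    pose proof (Cnorm_sub_tri (Csub q l2) (Csub q l1)).
    rewrite <- H4 in H5. unfold e in *. lra.
Qed.

Lemma cderiv_eq f z l : dlin f z l -> cderiv f z = l.
Proof.
  intro H. apply dlin_has in H.
  unfold cderiv. apply has_uniq with f z; auto.
  apply epsilon_spec. exists l; auto.
Qed.

Lemma dlin_local f g z l rho : 0 < rho ->
  (forall w, Cnorm w < rho -> f (Cadd z w) = g (Cadd z w)) ->
  dlin g z l -> dlin f z l.
Proof.
  intros Hr E H e He. destruct (H e He) as [d [Hd P]].
  exists (Rmin d rho). split. { unfold Rmin; destruct Rle_dec; lra. }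
  intros w Hw. assert (f z = g z).
  { replace z with (Cadd z C0) by ring. apply E. rewrite Cnorm_C0; lra. }
  rewrite H0, E. apply P. all: unfold Rmin in Hw; destruct Rle_dec in Hw; lra.
Qed.

Lemma dlin_cont f z l : dlin f z l -> exists d, 0 < d /\ forall w, Cnorm w < d ->
  Cnorm (Csub (f (Cadd z w)) (f z)) <= (Cnorm l + 1) * Cnorm w.
Proof.
  intro H. destruct (H 1) as [d [Hd P]]; [lra|]. exists d; split; auto.
  intros w Hw. specialize (P w Hw).
  replace (Csub (f (Cadd z w)) (f z)) with
    (Cadd (Csub (Csub (f (Cadd z w)) (f z)) (Cmul l w)) (Cmul l w)) by ring.
  eapply Rle_trans. apply Cnorm_triangle. rewrite Cnorm_mul. lra.
Qed.

Lemma dlin_const c z : dlin (fun _ => c) z C0.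
Proof.
  intros e He. exists 1. split; [lra|]. intros w _.
  replace (Csub (Csub c c) (Cmul C0 w)) with C0 by ring. rewrite Cnorm_C0.
  pose proof (Cnorm_ge0 w). nra.
Qed.

Lemma dlin_id z : dlin (fun x => x) z C1.
Proof.
  intros e He. exists 1. split; [lra|]. intros w _.
  replace (Csub (Csub (Cadd z w) z) (Cmul C1 w)) with C0 by ring. rewrite Cnorm_C0.
  pose proof (Cnorm_ge0 w). nra.
Qed.

Lemma dlin_add f g z a b : dlin f z a -> dlin g z b ->
  dlin (fun x => Cadd (f x) (g x)) z (Cadd a b).
Proof.
  intros Hf Hg e He.
  destruct (Hf (e/2)) as [d1 [H1 P1]]; [lra|].
  destruct (Hg (e/2)) as [d2 [H2 P2]]; [lra|].
  exists (Rmin d1 d2). split. { unfold Rmin; destruct Rle_dec; lra. }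
  intros w Hw.
  assert (Cnorm w < d1) by (unfold Rmin in Hw; destruct Rle_dec in Hw; lra).
  assert (Cnorm w < d2) by (unfold Rmin in Hw; destruct Rle_dec in Hw; lra).
  specialize (P1 w H). specialize (P2 w H0).
  replace (Csub (Csub (Cadd (f (Cadd z w)) (g (Cadd z w))) (Cadd (f z) (g z))) (Cmul (Cadd a b) w))
    with (Cadd (Csub (Csub (f (Cadd z w)) (f z)) (Cmul a w)) (Csub (Csub (g (Cadd z w)) (g z)) (Cmul b w))) by ring.
  eapply Rle_trans. apply Cnorm_triangle. lra.
Qed.

Lemma Cnorm_tri3 x y u : Cnorm (Cadd (Cadd x y) u) <= Cnorm x + Cnorm y + Cnorm u.
Proof.
  eapply Rle_trans. apply Cnorm_triangle. pose proof (Cnorm_triangle x y). lra.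
Qed.

Lemma dlin_mul f g z a b : dlin f z a -> dlin g z b ->
  dlin (fun x => Cmul (f x) (g x)) z (Cadd (Cmul a (g z)) (Cmul (f z) b)).
Proof.
  intros Hf Hg e He.
  set (Mf := Cnorm (f z)). set (Mg := Cnorm (g z)). set (Ma := Cnorm a). set (Mb := Cnorm b).
  assert (0 <= Mf) by apply Cnorm_ge0. assert (0 <= Mg) by apply Cnorm_ge0.
  assert (0 <= Ma) by apply Cnorm_ge0. assert (0 <= Mb) by apply Cnorm_ge0.
  destruct (dlin_cont g z b Hg) as [d0 [Hd0 P0]].
  destruct (Hf (e / (3 * (Mg + Mb + 2)))) as [d1 [Hd1 P1]].
  { apply Rdiv_lt_0_compat; lra. }
  destruct (Hg (e / (3 * (Mf + 1)))) as [d2 [Hd2 P2]].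
  { apply Rdiv_lt_0_compat; lra. }
  set (d3 := e / (3 * (Ma + 1) * (Mb + 1))).
  assert (H3 : 0 < d3) by (apply Rdiv_lt_0_compat; nra).
  exists (Rmin (Rmin d0 d1) (Rmin (Rmin d2 1) d3)).
  split. { repeat (unfold Rmin; destruct Rle_dec); lra. }
  intros w Hw.
  assert (W0 : Cnorm w < d0) by (revert Hw; repeat (unfold Rmin; destruct Rle_dec); lra).
  assert (W1 : Cnorm w < d1) by (revert Hw; repeat (unfold Rmin; destruct Rle_dec); lra).
  assert (W2 : Cnorm w < d2) by (revert Hw; repeat (unfold Rmin; destruct Rle_dec); lra).
  assert (W3 : Cnorm w < 1) by (revert Hw; repeat (unfold Rmin; destruct Rle_dec); lra).
  assert (W4 : Cnorm w < d3) by (revert Hw; repeat (unfold Rmin; destruct Rle_dec); lra).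
  specialize (P0 w W0). specialize (P1 w W1). specialize (P2 w W2).
  set (f' := f (Cadd z w)) in *. set (g' := g (Cadd z w)) in *.
  replace (Csub (Csub (Cmul f' g') (Cmul (f z) (g z))) (Cmul (Cadd (Cmul a (g z)) (Cmul (f z) b)) w))
    with (Cadd (Cadd (Cmul (Csub (Csub f' (f z)) (Cmul a w)) g') (Cmul (Cmul a w) (Csub g' (g z))))
               (Cmul (f z) (Csub (Csub g' (g z)) (Cmul b w)))) by ring.
  eapply Rle_trans. apply Cnorm_tri3.
  rewrite !Cnorm_mul. fold Mf Ma.
  set (nw := Cnorm w) in *. assert (0 <= nw) by apply Cnorm_ge0. fold Mb in P0.
  assert (Hg' : Cnorm g' <= Mg + Mb + 2).
  { replace g' with (Cadd (Csub g' (g z)) (g z)) by ring.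
    eapply Rle_trans. apply Cnorm_triangle. fold Mg. nra. }
  assert (T1 : Cnorm (Csub (Csub f' (f z)) (Cmul a w)) * Cnorm g' <= e / 3 * nw).
  { eapply Rle_trans. apply Rmult_le_compat; try apply Cnorm_ge0. apply P1. apply Hg'.
    replace (e / 3 * nw) with (e / (3 * (Mg + Mb + 2)) * nw * (Mg + Mb + 2)) by (field; lra).
    lra. }
  assert (T2 : Ma * nw * Cnorm (Csub g' (g z)) <= e / 3 * nw).
  { eapply Rle_trans. apply Rmult_le_compat_l. nra. apply P0. fold Mb.
    assert (nw * (Ma + 1) * (Mb + 1) <= e / 3).
    { replace (e/3) with (d3 * (Ma + 1) * (Mb + 1)) by (unfold d3; field; lra).
      apply Rmult_le_compat_r; [lra|]. apply Rmult_le_compat_r; lra. }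
    assert (Ma * nw * ((Mb + 1) * nw) <= nw * (Ma + 1) * (Mb + 1) * nw) by nra.
    nra. }
  assert (T3 : Mf * Cnorm (Csub (Csub g' (g z)) (Cmul b w)) <= e / 3 * nw).
  { eapply Rle_trans. apply Rmult_le_compat_l. lra. apply P2.
    replace (e / 3 * nw) with (e / (3 * (Mf + 1)) * nw * (Mf + 1)) by (field; lra).
    assert (0 <= e / (3 * (Mf + 1)) * nw). { apply Rmult_le_pos; [|lra]. apply Rlt_le, Rdiv_lt_0_compat; lra. }
    nra. }
  lra.
Qed.

Lemma dlin_scal c f z a : dlin f z a -> dlin (fun x => Cmul c (f x)) z (Cmul c a).
Proof.
  intro H. pose proof (dlin_mul (fun _ => c) f z C0 a (dlin_const c z) H) as H2.
  replace (Cmul c a) with (Cadd (Cmul C0 (f z)) (Cmul c a)) by ring. exact H2.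
Qed.

Lemma dlin_invaff p c z : Cadd p (Cmul c z) <> C0 ->
  dlin (fun x => Cinv (Cadd p (Cmul c x))) z
       (Copp (Cmul c (Cmul (Cinv (Cadd p (Cmul c z))) (Cinv (Cadd p (Cmul c z)))))).
Proof.
  intros Hg e He. set (g := Cadd p (Cmul c z)) in *.
  pose proof (Cnorm_pos g Hg) as Pg.
  set (Mc := Cnorm c). assert (0 <= Mc) by apply Cnorm_ge0.
  set (K := (Mc * Mc * (/ Cnorm g * / Cnorm g) * (2 / Cnorm g))).
  assert (0 <= K).
  { unfold K. apply Rmult_le_pos. apply Rmult_le_pos. nra.
    apply Rmult_le_pos; left; apply Rinv_0_lt_compat; lra.
    left; apply Rdiv_lt_0_compat; lra. }
  exists (Rmin (Cnorm g / (2 * (Mc + 1))) (e / (K + 1))). split.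
  { assert (0 < Cnorm g / (2 * (Mc + 1))) by (apply Rdiv_lt_0_compat; lra).
    assert (0 < e / (K + 1)) by (apply Rdiv_lt_0_compat; lra).
    unfold Rmin; destruct Rle_dec; lra. }
  intros w Hw.
  assert (W1 : Cnorm w <= Cnorm g / (2 * (Mc + 1))) by (unfold Rmin in Hw; destruct Rle_dec in Hw; lra).
  assert (W2 : Cnorm w <= e / (K + 1)) by (unfold Rmin in Hw; destruct Rle_dec in Hw; lra).
  set (g' := Cadd p (Cmul c (Cadd z w))).
  assert (Eg : g' = Cadd g (Cmul c w)) by (unfold g', g; ring).
  assert (Hmc : Mc * Cnorm w <= Cnorm g / 2).
  { set (t := Cnorm g / (2 * (Mc + 1))) in *.
    assert (t * (2 * (Mc + 1)) = Cnorm g) by (unfold t; field; lra).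
    assert (0 <= Cnorm w) by apply Cnorm_ge0. nra. }
  assert (Ng' : Cnorm g / 2 <= Cnorm g').
  { rewrite Eg.
    pose proof (Cnorm_sub_tri (Cadd g (Cmul c w)) (Cmul c w)) as T. rewrite (Cnorm_mul c w) in T.
    replace (Csub (Cadd g (Cmul c w)) (Cmul c w)) with g in T by ring.
    fold Mc in T. lra. }
  assert (Hg'0 : g' <> C0). { apply Cnorm_pos_neq. lra. }
  cbv beta. fold g'. fold g.
  replace (Csub (Csub (Cinv g') (Cinv g)) (Cmul (Copp (Cmul c (Cmul (Cinv g) (Cinv g)))) w))
    with (Cmul (Cmul (Cmul c c) (Cmul (Cinv g) (Cinv g))) (Cmul (Cinv g') (Cmul w w))).
  2: { rewrite Eg in *. field. split; auto. }
  rewrite !Cnorm_mul, !Cnorm_inv by auto. fold Mc.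
  assert (I1 : / Cnorm g' <= 2 / Cnorm g).
  { replace (2 / Cnorm g) with (/ (Cnorm g / 2)) by (field; lra).
    apply Rinv_le_contravar; lra. }
  set (nw := Cnorm w) in *. assert (0 <= nw) by apply Cnorm_ge0.
  assert (0 < / Cnorm g) by (apply Rinv_0_lt_compat; lra).
  assert (0 < / Cnorm g') by (apply Rinv_0_lt_compat; lra).
  assert (Mc * Mc * (/ Cnorm g * / Cnorm g) * (/ Cnorm g' * (nw * nw)) <= K * nw * nw).
  { unfold K. assert (0 <= Mc * Mc * (/ Cnorm g * / Cnorm g)) by
      (apply Rmult_le_pos; [nra| apply Rmult_le_pos; lra]).
    assert (0 <= nw * nw) by nra.
    replace (Mc * Mc * (/ Cnorm g * / Cnorm g) * (2 / Cnorm g) * nw * nw) with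
      (Mc * Mc * (/ Cnorm g * / Cnorm g) * (2 / Cnorm g * (nw * nw))) by ring.
    apply Rmult_le_compat_l; auto. apply Rmult_le_compat_r; auto. }
  assert (K * nw <= e).
  { set (u := e / (K + 1)) in *. assert (u * (K + 1) = e) by (unfold u; field; lra).
    assert (0 <= u) by lra. nra. }
  nra.
Qed.

Definition Dn (l : nat) (z : Cplx) : Cplx :=
  Cmul (RtoC (INR l)) (Csub (RtoC (INR l)) (Cmul (RtoC 2) (Cmul Ci z))).

Lemma GL_len om z n : length (Gamma_list om z n) = S n.
Proof.
  induction n; simpl; auto. rewrite length_app, IHn; simpl; lia.
Qed.

Lemma GL_nth om z n j : (j <= n)%nat -> nth j (Gamma_list om z n) C0 = Gamma om j z.
Proof.
  intro H. unfold Gamma. induction n.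
  - assert (j = 0%nat) by lia; subst; reflexivity.
  - destruct (Nat.eq_dec j (S n)) as [E|E]; [subst; reflexivity|].
    simpl Gamma_list at 1. rewrite app_nth1 by (rewrite GL_len; lia). apply IHn; lia.
Qed.

Lemma Gamma_0 om z : Gamma om 0 z = C1.
Proof. reflexivity. Qed.

Lemma GL_S om z n : Gamma_list om z (S n) = Gamma_list om z n ++
  [Cdiv (fold_right Cadd C0 (map (fun j => Cmul (RtoC (om (S n - j)%nat)) (nth j (Gamma_list om z n) C0)) (seq 0 (S n))))
       (Dn (S n) z)].
Proof. reflexivity. Qed.

Lemma Gamma_S om n z : Gamma om (S n) z =
  Cdiv (fold_right Cadd C0 (map (fun j => Cmul (RtoC (om (S n - j)%nat)) (Gamma om j z)) (seq 0 (S n))))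
       (Dn (S n) z).
Proof.
  unfold Gamma at 1. rewrite GL_S.
  rewrite app_nth2 by (rewrite GL_len; lia). rewrite GL_len, Nat.sub_diag.
  match goal with |- nth 0 [?x] _ = _ => change (nth 0 [x] C0) with x end.
  f_equal. apply (f_equal (fold_right Cadd C0)). apply map_ext_in. intros j Hj. apply in_seq in Hj.
  f_equal. apply GL_nth. lia.
Qed.

Definition Wset (z : Cplx) : Prop := Re z <> 0 \/ - / 2 < Im z.

Lemma Wset_open z : Wset z -> exists rho, 0 < rho /\ forall w, Cnorm w < rho -> Wset (Cadd z w).
Proof.
  intros [H|H].
  - exists (Rabs (Re z)). split. { apply Rabs_pos_lt; auto. }
    intros w Hw. left. pose proof (Cnorm_Re w). unfold Cadd, Re at 1; simpl.
    intro E. assert (Re w = - Re z) by (unfold Re in *; lra).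
    rewrite H1, Rabs_Ropp in H0. lra.
  - exists (Im z + / 2). split; [lra|]. intros w Hw. right.
    pose proof (Cnorm_Im w). unfold Cadd, Im at 1; simpl.
    pose proof (Rle_abs (- Im w)). rewrite Rabs_Ropp in H1. unfold Im in *. lra.
Qed.

Lemma Dn_Re l z : Re (Csub (RtoC (INR l)) (Cmul (RtoC 2) (Cmul Ci z))) = INR l + 2 * Im z.
Proof. destruct z; unfold Csub, Cadd, Copp, Cmul, RtoC, Ci, Re, Im; simpl; ring. Qed.
Lemma Dn_Im l z : Im (Csub (RtoC (INR l)) (Cmul (RtoC 2) (Cmul Ci z))) = - 2 * Re z.
Proof. destruct z; unfold Csub, Cadd, Copp, Cmul, RtoC, Ci, Re, Im; simpl; ring. Qed.

Lemma Dn_nz l z : (1 <= l)%nat -> Wset z -> Dn l z <> C0.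
Proof.
  intros Hl HW E. unfold Dn in E.
  assert (Hl' : 1 <= INR l) by (apply (le_INR 1); auto).
  pose proof (f_equal Cnorm E) as E2. rewrite Cnorm_mul, Cnorm_RtoC, Cnorm_C0 in E2.
  rewrite Rabs_right in E2 by lra.
  assert (Cnorm (Csub (RtoC (INR l)) (Cmul (RtoC 2) (Cmul Ci z))) = 0) by nra.
  apply Cnorm_eq0 in H. pose proof (Dn_Re l z). pose proof (Dn_Im l z).
  rewrite H in H0, H1. unfold C0 in H0, H1; simpl in H0, H1.
  destruct HW as [HW|HW]; unfold Re, Im in *; lra.
Qed.

Section Deriv.
Variable om : nat -> R.

Definition F l h := cderivn h (Gamma om l).
Definition Kc (l h : nat) := Cmul (RtoC (2 * INR l * INR h)) Ci.
Definition SmL l h (js : list nat) z :=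
  fold_right Cadd C0 (map (fun j => Cmul (RtoC (om (l - j)%nat)) (F j h z)) js).
Definition Sm l h z := SmL l h (seq 0 l) z.

Definition REC h := forall l z, (1 <= l)%nat -> Wset z ->
  F l h z = Cdiv (Cadd (Sm l h z) (Cmul (Kc l h) (F l (pred h) z))) (Dn l z).
Definition ZERO h := forall z, F 0 h z = match h with O => C1 | S _ => C0 end.
Definition DIFF h := forall l z, Wset z -> dlin (F l h) z (F l (S h) z).

Lemma F_S l h : F l (S h) = cderiv (F l h).
Proof. reflexivity. Qed.

Lemma dlin_ext f g z l : (forall x, f x = g x) -> dlin g z l -> dlin f z l.
Proof.
  intros E H. apply dlin_local with g 1; [lra| |auto]. intros; apply E.
Qed.

Lemma SmL_dlin l h z js : (forall j, In j js -> dlin (F j h) z (F j (S h) z)) ->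
  dlin (fun x => SmL l h js x) z (SmL l (S h) js z).
Proof.
  induction js as [|j js IH]; intro H.
  - change (SmL l (S h) [] z) with C0. apply dlin_ext with (fun _ => C0); [reflexivity|]. apply dlin_const.
  - simpl. apply (dlin_add (fun x => Cmul (RtoC (om (l - j)%nat)) (F j h x)) (fun x => SmL l h js x)).
    + apply dlin_scal. apply H; simpl; auto.
    + apply IH. intros; apply H; simpl; auto.
Qed.


Lemma step_l h l z : REC h ->
  (forall h', h = S h' -> DIFF h') ->
  (1 <= l)%nat -> Wset z ->
  (forall j, (j < l)%nat -> dlin (F j h) z (F j (S h) z)) ->
  dlin (F l h) z (Cdiv (Cadd (Sm l (S h) z) (Cmul (Kc l (S h)) (F l h z))) (Dn l z)).
Proof.
  intros Hrec Hdiff Hl HW Hj.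
  set (T := fun x => Cadd (Sm l h x) (Cmul (Kc l h) (F l (pred h) x))).
  assert (HT : dlin T z (Cadd (Sm l (S h) z) (Cmul (Kc l h) (F l h z)))).
  { unfold T. apply (dlin_add (fun x => Sm l h x) (fun x => Cmul (Kc l h) (F l (pred h) x))).
    - unfold Sm. apply SmL_dlin. intros j Hin. apply in_seq in Hin. apply Hj. lia.
    - destruct h as [|h'].
      + assert (Kc l 0 = C0) by (unfold Kc; simpl; apply Ceq; unfold RtoC, Cmul, Ci, C0, Re, Im; simpl; ring).
        rewrite H. replace (Cmul C0 (F l 0 z)) with C0 by ring.
        apply dlin_ext with (fun _ => C0). intros; ring. apply dlin_const.
      + apply dlin_scal. apply (Hdiff h' eq_refl). auto. }
  set (p := Cmul (RtoC (INR l)) (RtoC (INR l))).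
  set (c := Copp (Cmul (RtoC (INR l)) (Cmul (RtoC 2) Ci))).
  assert (ED : forall x, Dn l x = Cadd p (Cmul c x)) by (intros; unfold Dn, p, c; ring).
  assert (Dz : Dn l z <> C0) by (apply Dn_nz; auto).
  assert (HR : dlin (fun x => Cinv (Dn l x)) z
       (Copp (Cmul c (Cmul (Cinv (Dn l z)) (Cinv (Dn l z)))))).
  { apply dlin_ext with (fun x => Cinv (Cadd p (Cmul c x))). intros; rewrite ED; auto.
    rewrite ED. apply dlin_invaff. rewrite <- ED; auto. }
  pose proof (dlin_mul T (fun x => Cinv (Dn l x)) z _ _ HT HR) as HM.
  destruct (Wset_open z HW) as [rho [Hrho Hopen]].
  assert (EV : Cdiv (Cadd (Sm l (S h) z) (Cmul (Kc l (S h)) (F l h z))) (Dn l z) =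
    Cadd (Cmul (Cadd (Sm l (S h) z) (Cmul (Kc l h) (F l h z))) (Cinv (Dn l z)))
       (Cmul (T z) (Copp (Cmul c (Cmul (Cinv (Dn l z)) (Cinv (Dn l z))))))).
  { rewrite (Hrec l z Hl HW) at 1. rewrite (Hrec l z Hl HW) at 1. unfold T.
    unfold Kc, c. rewrite S_INR.
    rewrite !RtoC_mul, RtoC_add.
    rewrite RtoC_1. field. auto. }
  rewrite EV.
  apply (dlin_local (F l h) (fun x => Cmul (T x) (Cinv (Dn l x))) z _ rho Hrho); [|exact HM].
  intros w Hw. unfold F at 1. fold (F l h). rewrite Hrec; auto.
Qed.



Lemma Kc0 l : Kc l 0 = C0.
Proof. unfold Kc; simpl; apply Ceq; unfold RtoC, Cmul, Ci, C0, Re, Im; simpl; ring. Qed.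

Lemma ZERO_S h : ZERO h -> ZERO (S h).
Proof.
  intros H z. rewrite F_S. apply cderiv_eq.
  apply dlin_ext with (fun _ => match h with O => C1 | S _ => C0 end).
  intro x; apply H. apply dlin_const.
Qed.

Lemma DIFF_h h : REC h -> ZERO h -> (forall h', h = S h' -> DIFF h') -> DIFF h.
Proof.
  intros Hr Hz Hd l. induction l as [l IH] using (well_founded_induction lt_wf).
  intros z HW. destruct l as [|l'].
  - rewrite (ZERO_S h Hz z). apply dlin_ext with (fun _ => match h with O => C1 | S _ => C0 end).
    intro x; apply Hz. apply dlin_const.
  - assert (HH : dlin (F (S l') h) z
      (Cdiv (Cadd (Sm (S l') (S h) z) (Cmul (Kc (S l') (S h)) (F (S l') h z))) (Dn (S l') z))).
    { apply step_l; auto. lia. }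
    rewrite F_S. rewrite (cderiv_eq _ _ _ HH). exact HH.
Qed.

Lemma REC_S h : REC h -> ZERO h -> (forall h', h = S h' -> DIFF h') -> REC (S h).
Proof.
  intros Hr Hz Hd l z Hl HW. rewrite F_S. apply cderiv_eq. simpl pred.
  apply step_l; auto. intros j Hj. apply DIFF_h; auto.
Qed.

Lemma REC_0 : REC 0.
Proof.
  intros l z Hl HW. destruct l as [|n]; [lia|].
  unfold F at 1. simpl cderivn. rewrite Gamma_S. rewrite Kc0.
  replace (Cadd (Sm (S n) 0 z) (Cmul C0 (F (S n) (pred 0) z))) with (Sm (S n) 0 z) by ring.
  reflexivity.
Qed.

Lemma all_h : forall h, REC h /\ ZERO h /\ (forall h', h = S h' -> DIFF h').
Proof.
  induction h as [|h [Hr [Hz Hd]]].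
  - split; [apply REC_0|]. split; [intro; reflexivity|]. intros; discriminate.
  - split; [apply REC_S; auto|]. split; [apply ZERO_S; auto|].
    intros h' E. injection E; intros; subst. apply DIFF_h; auto.
Qed.

End Deriv.

Definition rsum (f : nat -> R) (js : list nat) := fold_right Rplus 0 (map f js).

Lemma Cnorm_fold (g : nat -> Cplx) js :
  Cnorm (fold_right Cadd C0 (map g js)) <= rsum (fun j => Cnorm (g j)) js.
Proof.
  induction js; simpl. rewrite Cnorm_C0; unfold rsum; simpl; lra.
  eapply Rle_trans. apply Cnorm_triangle. unfold rsum in *; simpl. lra.
Qed.

Lemma rsum_le f g js : (forall j, In j js -> f j <= g j) -> rsum f js <= rsum g js.
Proof.
  induction js; simpl; intros; unfold rsum in *; simpl. lra.
  apply Rplus_le_compat. apply H; auto. apply IHjs; auto.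
Qed.

Lemma rsum_lin a b f g js : rsum (fun j => a * f j + b * g j) js = a * rsum f js + b * rsum g js.
Proof. induction js; unfold rsum in *; simpl. ring. rewrite IHjs. ring. Qed.

Lemma rsum_seqS f n : rsum f (seq 0 (S n)) = rsum f (seq 0 n) + f n.
Proof.
  unfold rsum. rewrite seq_S, map_app, fold_right_app. simpl.
  generalize (f n). induction (map f (seq 0 n)); intros; simpl. ring. rewrite IHl. ring.
Qed.

Lemma rsum_ind0 n : (1 <= n)%nat -> rsum (fun j => if Nat.eqb j 0 then 1 else 0) (seq 0 n) = 1.
Proof.
  intro H. induction n; [lia|]. rewrite rsum_seqS.
  destruct n. simpl. unfold rsum; simpl. ring.
  rewrite IHn by lia. simpl. ring.
Qed.

Lemma bern D x : 0 <= x -> INR (S D) * x ^ D + x ^ (S D) <= (x + 1) ^ (S D).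
Proof.
  intro Hx. induction D.
  - simpl. lra.
  - rewrite S_INR. rewrite S_INR in IHD.
    assert (0 <= x ^ D) by (apply pow_le; auto).
    assert (0 <= INR D) by apply pos_INR.
    replace ((x+1) ^ S (S D)) with ((x+1) * (x+1)^(S D)) by (simpl; ring).
    replace (x ^ S (S D)) with (x * x * x ^ D) by (simpl; ring).
    replace (x ^ S D) with (x * x ^ D) in * by (simpl; ring).
    set (a := x ^ D) in *. set (b := (x + 1) ^ S D) in *.
    assert ((x+1) * ((INR D + 1) * a + x * a) <= (x+1) * b) by (apply Rmult_le_compat_l; lra).
    assert (0 <= (INR D + 1) * a) by (apply Rmult_le_pos; lra). rewrite S_INR. nra.
Qed.

Lemma powsum D n : rsum (fun j => INR j ^ D) (seq 0 n) <= INR n ^ (S D) / INR (S D).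
Proof.
  assert (0 < INR (S D)) by (apply lt_0_INR; lia).
  induction n.
  - unfold rsum; simpl. unfold Rdiv. rewrite Rmult_0_l. lra.
  - rewrite rsum_seqS. rewrite S_INR.
    pose proof (bern D (INR n) (pos_INR n)).
    apply Rle_trans with (INR n ^ S D / INR (S D) + INR n ^ D); [lra|].
    apply (Rmult_le_reg_r (INR (S D))); auto.
    unfold Rdiv. rewrite Rmult_plus_distr_r, !Rmult_assoc, Rinv_l by lra. lra.
Qed.

Lemma notOmega eps z : ~ Omega eps z ->
  eps * Cnorm z < Rabs (Re z) \/ - ((1 - eps) / 2) < Im z.
Proof.
  intro H. unfold Omega in H.
  destruct (Rle_dec (Rabs (Re z)) (eps * Cnorm z)); [|left; lra].
  destruct (Rle_dec (Im z) (- ((1 - eps) / 2))); [|right; lra].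
  exfalso; auto.
Qed.

Lemma notOmega_W eps z : 0 < eps < 1 -> ~ Omega eps z -> Wset z.
Proof.
  intros He H. destruct (notOmega eps z H) as [H1|H1].
  - left. intro E. rewrite E, Rabs_R0 in H1. pose proof (Cnorm_ge0 z). nra.
  - right. lra.
Qed.

Lemma geo_real eps L nz ax ay y N : 0 < eps < 1 -> 1 <= L -> 0 <= nz ->
  nz <= ax + ay -> ax <= nz -> ay <= nz -> ay = Rabs y ->
  Rabs (L + 2 * y) <= N -> 2 * ax <= N ->
  (eps * nz < ax \/ - ((1 - eps) / 2) < y) -> eps / 4 * (L + nz) <= N.
Proof.
  intros He HL nz0 S1 S2 S3 Ey N1 N2 [A|B].
  - destruct (Rle_dec (L / 4) nz).
    + assert (0 <= eps * (7 * nz - L)) by (apply Rmult_le_pos; lra). lra.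
    + assert (L - 2 * ay <= Rabs (L + 2 * y)).
      { rewrite Ey. destruct (Rle_dec 0 y).
        - rewrite Rabs_right by lra. rewrite Rabs_right by lra. lra.
        - rewrite (Rabs_left y) by lra. pose proof (Rle_abs (L + 2 * y)). lra. }
      assert (eps * (L + nz) <= L + nz) by nra. lra.
  - destruct (Rle_dec 0 y).
    + assert (Rabs (L + 2 * y) = L + 2 * y) by (apply Rabs_right; lra).
      assert (ay = y) by (rewrite Ey; apply Rabs_right; lra).
      assert (eps * (L + nz) <= L + nz) by nra. lra.
    + assert (ay = - y) by (rewrite Ey; apply Rabs_left; lra).
      assert (Rabs (L + 2 * y) >= L + 2 * y) by apply Rle_ge, Rle_abs.
      assert (0 <= (1 - eps) * (L - 1)) by (apply Rmult_le_pos; lra).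
      assert (N >= eps * L) by lra.
      assert (0 <= ax) by lra.
      assert (eps * ax <= ax) by nra.
      assert (eps * ay <= eps * (L / 2)) by (apply Rmult_le_compat_l; lra).
      assert (eps * nz <= eps * (ax + ay)) by (apply Rmult_le_compat_l; lra).
      lra.
Qed.

Lemma geo eps l z : 0 < eps < 1 -> (1 <= l)%nat -> ~ Omega eps z ->
  eps / 4 * INR l * (INR l + Cnorm z) <= Cnorm (Dn l z).
Proof.
  intros He Hl H.
  assert (HL : 1 <= INR l) by (apply (le_INR 1); auto).
  unfold Dn. rewrite Cnorm_mul, Cnorm_RtoC, Rabs_right by lra.
  set (N := Cnorm (Csub (RtoC (INR l)) (Cmul (RtoC 2) (Cmul Ci z)))).
  assert (N1 : Rabs (INR l + 2 * Im z) <= N) by (rewrite <- (Dn_Re l z); apply Cnorm_Re).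
  assert (N2 : Rabs (- 2 * Re z) <= N) by (rewrite <- (Dn_Im l z); apply Cnorm_Im).
  rewrite Rabs_mult in N2. replace (Rabs (-2)) with 2 in N2 by (rewrite Rabs_left; lra).
  assert (Key : eps / 4 * (INR l + Cnorm z) <= N).
  { apply (geo_real eps (INR l) (Cnorm z) (Rabs (Re z)) (Rabs (Im z)) (Im z) N); auto.
    apply Cnorm_ge0. apply Cnorm_le_sum. apply Cnorm_Re. apply Cnorm_Im.
    apply notOmega; auto. }
  replace (eps / 4 * INR l * (INR l + Cnorm z)) with (INR l * (eps / 4 * (INR l + Cnorm z))) by ring.
  apply Rmult_le_compat_l; lra.
Qed.

Lemma fin_step X Dn S1 S2 T c L Y : 0 < Dn -> 0 <= T -> c * L * (L + Y) / 2 <= Dn ->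
  X * Dn <= S1 + S2 -> S1 <= c * L * L * T / 2 -> S2 <= c * L * Y * T / 2 -> X <= T.
Proof.
  intros HD HT H1 H2 H3 H4.
  assert (X * Dn <= T * Dn).
  { eapply Rle_trans; [apply H2|]. assert (c * L * (L + Y) / 2 * T <= Dn * T) by (apply Rmult_le_compat_r; lra). nra. }
  apply Rmult_le_reg_r with Dn; auto.
Qed.

Fixpoint Cs (A c : R) (h : nat) : R :=
  match h with
  | O => 2 * A / c + 1
  | S h' => 4 * INR (S h') * Cs A c h' / c + 1
  end.

Lemma Cs_pos A c h : 0 < A -> 0 < c -> 0 < Cs A c h.
Proof.
  intros HA Hc. induction h; simpl Cs.
  - assert (0 < 2 * A / c) by (apply Rdiv_lt_0_compat; lra). lra.
  - assert (0 < INR (S h)) by (apply lt_0_INR; lia).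
    assert (0 < 4 * INR (S h) * Cs A c h) by (apply Rmult_lt_0_compat; lra).
    assert (0 < 4 * INR (S h) * Cs A c h / c) by (apply Rdiv_lt_0_compat; lra). change (0 < 4 * INR (S h) * Cs A c h / c + 1). lra.
Qed.

Lemma Cnorm_Ci : Cnorm Ci = 1.
Proof. unfold Cnorm, Ci, Re, Im; simpl. replace (0*0+1*1) with 1 by ring. apply sqrt_1. Qed.
Lemma Cnorm_C1 : Cnorm C1 = 1.
Proof. unfold Cnorm, C1, Re, Im; simpl. replace (1*1+0*0) with 1 by ring. apply sqrt_1. Qed.

Section Bound.
Variable om : nat -> R.
Variable A eps : R.
Hypothesis HA : 0 < A.
Hypothesis Hom : forall n, (1 <= n)%nat -> Rabs (om n) <= A * INR n.
Hypothesis Heps : 0 < eps < 1.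
Variable D : nat.
Hypothesis HD1 : (1 <= D)%nat.
Hypothesis HD : 2 * A <= eps / 4 * INR (S D).

Let c := eps / 4.

Lemma core h l z C : (1 <= l)%nat -> ~ Omega eps z -> 0 < C ->
  (forall j, (1 <= j)%nat -> (j < l)%nat ->
     Cnorm (F om j h z) <= C * INR j ^ D / (1 + Cnorm z) ^ (S h)) ->
  A * INR l * Cnorm (F om 0 h z) + Cnorm (Kc l h) * Cnorm (F om l (pred h) z)
    <= c * INR l * (1 + Cnorm z) * (C * INR l ^ D / (1 + Cnorm z) ^ (S h)) / 2 ->
  Cnorm (F om l h z) <= C * INR l ^ D / (1 + Cnorm z) ^ (S h).
Proof.
  intros Hl HO HC Hprev HS2.
  assert (Hc : 0 < c) by (unfold c; lra).
  assert (HW : Wset z) by (apply notOmega_W with eps; auto).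
  destruct (all_h om h) as [Hrec _].
  assert (HL : 1 <= INR l) by (apply (le_INR 1); auto).
  set (L := INR l) in *.
  set (Y := 1 + Cnorm z) in *.
  assert (HY : 1 <= Y) by (unfold Y; pose proof (Cnorm_ge0 z); lra).
  set (V := Y ^ S h) in *.
  assert (HV : 0 < V) by (unfold V; apply pow_lt; lra).
  set (u := L ^ D) in *.
  assert (Hu : 1 <= u) by (unfold u; apply pow_R1_Rle; lra).
  set (T := C * u / V).
  assert (HT : 0 <= T) by (unfold T; apply Rlt_le, Rdiv_lt_0_compat; nra).
  assert (Dz : Dn l z <> C0) by (apply Dn_nz; auto).
  pose proof (Cnorm_pos _ Dz) as HDp.
  set (Num := Cadd (Sm om l h z) (Cmul (Kc l h) (F om l (pred h) z))).
  assert (EX : Cnorm (F om l h z) * Cnorm (Dn l z) = Cnorm Num).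
  { rewrite (Hrec l z Hl HW). fold Num. rewrite Cnorm_div by auto. field. lra. }
  set (S1 := A * L * (C / V) * (L ^ S D / INR (S D))).
  set (S2 := A * L * Cnorm (F om 0 h z) + Cnorm (Kc l h) * Cnorm (F om l (pred h) z)).
  assert (HSm : Cnorm (Sm om l h z) <= A * L * Cnorm (F om 0 h z) + S1).
  { unfold Sm, SmL. eapply Rle_trans. apply Cnorm_fold.
    eapply Rle_trans. apply rsum_le with
      (g := fun j => (A * L * Cnorm (F om 0 h z)) * (if Nat.eqb j 0 then 1 else 0)
                     + (A * L * (C / V)) * INR j ^ D).
    - intros j Hj. apply in_seq in Hj. rewrite Cnorm_mul, Cnorm_RtoC.
      assert (Hom' : Rabs (om (l - j)%nat) <= A * L).
      { eapply Rle_trans. apply Hom. lia. apply Rmult_le_compat_l. lra.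
        unfold L. apply le_INR. lia. }
      pose proof (Rabs_pos (om (l - j)%nat)). pose proof (Cnorm_ge0 (F om j h z)).
      destruct j as [|j'].
      + simpl Nat.eqb. rewrite pow_i by lia. rewrite Rmult_0_r, Rmult_1_r, Rplus_0_r.
        apply Rmult_le_compat_r; auto.
      + simpl Nat.eqb. rewrite Rmult_0_r, Rplus_0_l.
        specialize (Hprev (S j') ltac:(lia) ltac:(lia)). fold Y V in Hprev.
        eapply Rle_trans. apply Rmult_le_compat; eauto.
        unfold Rdiv in *. apply Req_le. ring.
    - rewrite rsum_lin, rsum_ind0 by auto. unfold S1.
      assert (0 <= A * L * (C / V)).
      { apply Rmult_le_pos. nra. apply Rlt_le, Rdiv_lt_0_compat; auto. }
      pose proof (powsum D l). fold L in H0.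
      apply Rplus_le_compat. lra. apply Rmult_le_compat_l; auto. }
  assert (HNum : Cnorm Num <= S1 + S2).
  { unfold Num, S2. eapply Rle_trans. apply Cnorm_triangle. rewrite Cnorm_mul. lra. }
  apply (fin_step (Cnorm (F om l h z)) (Cnorm (Dn l z)) S1 S2 T c L Y); auto.
  - pose proof (geo eps l z Heps Hl HO). fold L c in H.
    pose proof (Cnorm_ge0 z).
    assert (L + Y <= 2 * (L + Cnorm z)) by (unfold Y; lra).
    assert (c * L * (L + Y) <= c * L * (2 * (L + Cnorm z))) by (apply Rmult_le_compat_l; nra).
    lra.
  - rewrite EX. auto.
  - unfold S1, T. replace (L ^ S D) with (L * u) by (unfold u; simpl; ring).
    assert (INR (S D) > 0) by (apply lt_0_INR; lia).
    assert (A / INR (S D) <= c / 2).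
    { apply Rmult_le_reg_r with (INR (S D)); auto. unfold Rdiv.
      rewrite Rmult_assoc, Rinv_l by lra. unfold c. lra. }
    assert (0 <= L * L * C * u / V).
    { apply Rlt_le, Rdiv_lt_0_compat; auto. apply Rmult_lt_0_compat; [apply Rmult_lt_0_compat; [nra|lra] | lra]. }
    replace (A * L * (C / V) * (L * u / INR (S D))) with (A / INR (S D) * (L * L * C * u / V)) by (field; lra).
    replace (c * L * L * (C * u / V) / 2) with (c / 2 * (L * L * C * u / V)) by (field; lra).
    apply Rmult_le_compat_r; auto.
Qed.

Lemma Cnorm_Kc l h : Cnorm (Kc l h) = 2 * INR l * INR h.
Proof.
  unfold Kc. rewrite Cnorm_mul, Cnorm_RtoC, Cnorm_Ci, Rmult_1_r.
  apply Rabs_right. pose proof (pos_INR l); pose proof (pos_INR h).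
  apply Rle_ge. apply Rmult_le_pos; lra.
Qed.

Lemma bound_h : forall h l z, (1 <= l)%nat -> ~ Omega eps z ->
  Cnorm (F om l h z) <= Cs A c h * INR l ^ D / (1 + Cnorm z) ^ (S h).
Proof.
  assert (Hc : 0 < c) by (unfold c; lra).
  induction h as [|h' IHh]; intro l;
  induction l as [l IHl] using (well_founded_induction lt_wf);
  intros z Hl HO;
  destruct (all_h om 0) as [_ [HZ0 _]];
  assert (HL : 1 <= INR l) by (apply (le_INR 1); auto);
  assert (Hu : 1 <= INR l ^ D) by (apply pow_R1_Rle; lra);
  assert (HY : 1 <= 1 + Cnorm z) by (pose proof (Cnorm_ge0 z); lra).
  - apply core; auto. apply Cs_pos; auto.
    rewrite HZ0, Kc0, Cnorm_C0, Cnorm_C1. simpl Cs.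
    replace (c * INR l * (1 + Cnorm z) * ((2 * A / c + 1) * INR l ^ D / (1 + Cnorm z) ^ 1) / 2)
      with ((A + c / 2) * (INR l * INR l ^ D)) by (simpl; field; lra).
    assert (INR l <= INR l * INR l ^ D) by nra. nra.
  - destruct (all_h om (S h')) as [_ [HZ _]].
    apply core; auto. apply Cs_pos; auto.
    rewrite HZ, Cnorm_C0, Cnorm_Kc. simpl pred.
    pose proof (IHh l z Hl HO) as Hp.
    set (Cp := Cs A c h') in *.
    assert (HCp : 0 < Cp) by (apply Cs_pos; auto).
    set (Y := 1 + Cnorm z) in *.
    set (u := INR l ^ D) in *.
    assert (HV : 0 < Y ^ S h') by (apply pow_lt; lra).
    change (Cs A c (S h')) with (4 * INR (S h') * Cp / c + 1).
    replace (c * INR l * Y * ((4 * INR (S h') * Cp / c + 1) * u / Y ^ S (S h')) / 2)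
      with ((2 * INR (S h') * Cp + c / 2) * (INR l * u) / Y ^ S h')
      by (change (Y ^ S (S h')) with (Y * Y ^ S h'); field; lra).
    assert (0 <= INR (S h')) by apply pos_INR.
    rewrite Rmult_0_r, Rplus_0_l.
    assert (2 * INR l * INR (S h') * Cnorm (F om l h' z) <= 2 * INR l * INR (S h') * (Cp * u / Y ^ S h')).
    { apply Rmult_le_compat_l; auto. apply Rmult_le_pos; lra. }
    eapply Rle_trans; [apply H0|].
    unfold Rdiv. rewrite !Rmult_assoc. 
    assert (0 < / Y ^ S h') by (apply Rinv_0_lt_compat; auto).
    assert (0 <= INR l * (u * / Y ^ S h')) by (apply Rmult_le_pos; [lra| apply Rmult_le_pos; lra]).
    nra.
Qed.

End Bound.

Lemma fin_bound (f : nat -> R) N : exists M, forall n, (n <= N)%nat -> Rabs (f n) <= M.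
Proof.
  induction N.
  - exists (Rabs (f 0%nat)). intros n Hn. assert (n = 0%nat) by lia. subst; lra.
  - destruct IHN as [M HM]. exists (Rmax M (Rabs (f (S N)))). intros n Hn.
    destruct (Nat.eq_dec n (S N)). subst. apply Rmax_r.
    eapply Rle_trans. apply HM. lia. apply Rmax_l.
Qed.

Lemma isum_terms_bounded f l : infinite_sum f l -> exists M, forall n, Rabs (f n) <= M.
Proof.
  intro H. destruct (H 1) as [N HN]; [lra|].
  destruct (fin_bound (sum_f_R0 f) N) as [M HM].
  assert (HS : forall n, Rabs (sum_f_R0 f n) <= Rmax M (Rabs l + 1)).
  { intro n. destruct (le_lt_dec n N).
    - eapply Rle_trans. apply HM; auto. apply Rmax_l.
    - eapply Rle_trans; [|apply Rmax_r]. specialize (HN n ltac:(lia)). unfold Rdist in HN.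
      pose proof (Rabs_triang (sum_f_R0 f n - l) l). replace (sum_f_R0 f n - l + l) with (sum_f_R0 f n) in H0 by ring.
      lra. }
  exists (2 * Rmax M (Rabs l + 1)). intro n. destruct n.
  - pose proof (HS 0%nat). simpl in H0. pose proof (Rabs_pos (f 0%nat)). lra.
  - replace (f (S n)) with (sum_f_R0 f (S n) - sum_f_R0 f n) by (simpl; ring).
    eapply Rle_trans. apply Rabs_triang. rewrite Rabs_Ropp. pose proof (HS (S n)). pose proof (HS n). lra.
Qed.

Lemma sum_zeros f N : (forall i, (i <= N)%nat -> f i = 0) -> sum_f_R0 f N = 0.
Proof.
  induction N; intros H; simpl. apply H; lia. rewrite IHN. rewrite H. ring. lia. intros; apply H; lia.
Qed.

Lemma coef_unique (b : nat -> R) :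
  (forall x, 0 < x < 1 -> infinite_sum (fun n => b (S n) * x ^ (S n)) 0) ->
  forall N, b (S N) = 0.
Proof.
  intros H.
  destruct (isum_terms_bounded _ _ (H (/2) ltac:(lra))) as [M HM].
  assert (HM0 : 0 <= M) by (pose proof (HM 0%nat); pose proof (Rabs_pos (b 1%nat * (/2)^1)); lra).
  assert (Hb : forall n, Rabs (b (S n)) <= M * 2 ^ (S n)).
  { intro n. specialize (HM n). rewrite Rabs_mult, (Rabs_right ((/2)^(S n))) in HM
      by (apply Rle_ge, pow_le; lra).
    rewrite <- Rinv_pow in HM by lra.
    assert (0 < 2 ^ S n) by (apply pow_lt; lra).
    apply Rmult_le_reg_r with (/ 2 ^ S n). apply Rinv_0_lt_compat; auto.
    rewrite Rmult_assoc, Rinv_r by lra. lra. }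
  intro N. induction N as [N IH] using (well_founded_induction lt_wf).
  assert (Key : forall x, 0 < x < / 4 -> Rabs (b (S N)) * x ^ (S N) <= 2 * M * (2 * x) ^ (S (S N))).
  { intros x Hx. set (t := fun n => b (S n) * x ^ (S n)).
    set (q := 2 * x). assert (Hq : 0 < q <= / 2) by (unfold q; lra).
    assert (Ht : forall n, Rabs (t n) <= M * q ^ (S n)).
    { intro n. unfold t, q. rewrite Rabs_mult, Rpow_mult_distr, (Rabs_right (x ^ S n)) by (apply Rle_ge, pow_le; lra).
      rewrite <- Rmult_assoc. apply Rmult_le_compat_r. apply pow_le; lra. apply Hb. }
    assert (S0 : sum_f_R0 t N = t N).
    { destruct N as [|N']. reflexivity. simpl. rewrite sum_zeros. ring.
      intros i Hi. unfold t. rewrite (IH i) by lia. ring. }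
    assert (Inv : forall j, Rabs (sum_f_R0 t (N + j) - t N) <= 2 * M * q ^ (S (S N)) - 2 * M * q ^ (S (S (N + j)))).
    { induction j.
      - rewrite Nat.add_0_r, S0. replace (t N - t N) with 0 by ring. rewrite Rabs_R0. lra.
      - rewrite Nat.add_succ_r. simpl sum_f_R0.
        replace (sum_f_R0 t (N + j) + t (S (N + j)) - t N) with ((sum_f_R0 t (N + j) - t N) + t (S (N + j))) by ring.
        eapply Rle_trans. apply Rabs_triang. specialize (Ht (S (N + j))).
        assert (M * q ^ S (S (S (N + j))) <= M * q ^ S (S (N + j)) / 2).
        { replace (q ^ S (S (S (N + j)))) with (q * q ^ S (S (N + j))) by (simpl; ring).
          assert (0 <= M * q ^ S (S (N + j))) by (apply Rmult_le_pos; auto; apply pow_le; lra).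
          nra. }
        lra. }
    apply Rnot_lt_le. intro Hlt.
    set (g := Rabs (b (S N)) * x ^ S N - 2 * M * q ^ S (S N)).
    destruct (H x ltac:(lra) g ltac:(unfold g; lra)) as [K HK].
    specialize (HK (N + K)%nat ltac:(lia)). unfold Rdist in HK. rewrite Rminus_0_r in HK.
    specialize (Inv K).
    assert (0 <= 2 * M * q ^ S (S (N + K))) by (apply Rmult_le_pos; [lra| apply pow_le; lra]).
    assert (TT : Rabs (t N) <= Rabs (sum_f_R0 t (N + K) - t N) + Rabs (sum_f_R0 t (N+K))).
    { pose proof (Rabs_triang (t N - sum_f_R0 t (N+K)) (sum_f_R0 t (N+K))) as TR.
      replace (t N - sum_f_R0 t (N + K) + sum_f_R0 t (N + K)) with (t N) in TR by ring.
      rewrite Rabs_minus_sym in TR. exact TR. }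
    unfold t at 1 in TT. rewrite Rabs_mult, (Rabs_right (x ^ S N)) in TT by (apply Rle_ge, pow_le; lra).
    fold t in HK. unfold g in HK. lra. }
  destruct (Req_dec (b (S N)) 0) as [E|E]; [exact E|]. exfalso.
  assert (Hpos : 0 < Rabs (b (S N))) by (apply Rabs_pos_lt; auto).
  set (B := Rabs (b (S N))) in *.
  set (K := 2 * M * 2 ^ (S (S N)) * 2 + 1).
  assert (HK : 0 < K) by (unfold K; assert (0 < 2 ^ S (S N)) by (apply pow_lt; lra); nra).
  set (x := Rmin (/ 8) (B / (2 * K))).
  assert (Hx : 0 < x < / 4).
  { unfold x, Rmin. destruct Rle_dec. lra. split; [apply Rdiv_lt_0_compat; lra| lra]. }
  specialize (Key x Hx). rewrite Rpow_mult_distr in Key.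
  replace (x ^ S (S N)) with (x * x ^ S N) in Key by (simpl; ring).
  assert (0 < x ^ S N) by (apply pow_lt; lra).
  assert (B <= 2 * M * 2 ^ S (S N) * x).
  { apply Rmult_le_reg_r with (x ^ S N); auto. nra. }
  assert (x <= B / (2 * K)) by apply Rmin_r.
  assert (2 * M * 2 ^ S (S N) * x <= K * x) by (unfold K; nra).
  assert (K * x <= B / 2).
  { apply Rmult_le_compat_l with (r := K) in H2; [|lra]. replace (K * (B / (2 * K))) with (B / 2) in H2 by (field; lra). lra. }
  lra.
Qed.

Lemma bern1 t n : 0 <= t -> 1 + INR n * t <= (1 + t) ^ n.
Proof.
  intro Ht. induction n. simpl; lra.
  rewrite S_INR. simpl. assert (0 <= INR n) by apply pos_INR. nra.
Qed.

Lemma n_pow_cv y : Rabs y < 1 -> Un_cv (fun n => INR n * y ^ n) 0.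
Proof.
  intro Hy. set (q := Rabs y). fold q in Hy. assert (0 <= q) by apply Rabs_pos.
  set (p := sqrt ((1 + q) / 2)).
  assert (Hp2 : p * p = (1 + q) / 2) by (unfold p; apply sqrt_sqrt; lra).
  assert (Hp0 : 0 < p) by (unfold p; apply sqrt_lt_R0; lra).
  assert (Hp1 : p < 1) by nra.
  set (t := / p - 1). assert (Ht : 0 < t).
  { unfold t. assert (1 < / p). { rewrite <- Rinv_1. apply Rinv_lt_contravar; lra. } lra. }
  assert (Hb : forall n, INR n * p ^ n <= / t).
  { intro n. pose proof (bern1 t n (Rlt_le _ _ Ht)).
    assert (p * (1 + t) = 1) by (unfold t; field; lra).
    assert (p ^ n * (1 + t) ^ n = 1) by (rewrite <- Rpow_mult_distr, H1; apply pow1).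
    assert (0 < p ^ n) by (apply pow_lt; lra).
    assert (INR n * t * p ^ n <= 1) by nra.
    apply Rmult_le_reg_r with t; auto. rewrite Rinv_l by lra. nra. }
  intros e He.
  destruct (pow_lt_1_zero p ltac:(rewrite Rabs_right; lra) (e * t)) as [N HN].
  { apply Rmult_lt_0_compat; lra. }
  exists N. intros n Hn. unfold Rdist. rewrite Rminus_0_r.
  specialize (HN n Hn). rewrite Rabs_right in HN by (apply Rle_ge, pow_le; lra).
  rewrite Rabs_mult, Rabs_right by (apply Rle_ge, pos_INR). rewrite <- RPow_abs. fold q.
  assert (q ^ n <= p ^ n * p ^ n).
  { rewrite <- Rpow_mult_distr. apply pow_incr. split; auto. nra. }
  assert (0 <= INR n) by apply pos_INR.
  assert (INR n * q ^ n <= INR n * p ^ n * p ^ n) by nra.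
  assert (INR n * p ^ n * p ^ n <= / t * p ^ n).
  { apply Rmult_le_compat_r. apply pow_le; lra. apply Hb. }
  assert (/ t * p ^ n < e).
  { apply Rmult_lt_reg_l with t; auto. rewrite <- Rmult_assoc, Rinv_r by lra. lra. }
  lra.
Qed.

Lemma psum_formula y N : y <> 1 ->
  sum_f_R0 (fun n => INR (S n) * y ^ (S n)) N =
  (y - INR (N + 2) * y ^ (N + 2) + INR (N + 1) * y ^ (N + 3)) / ((1 - y) * (1 - y)).
Proof.
  intro Hy. assert (1 - y <> 0) by lra.
  induction N.
  - simpl. field. auto.
  - rewrite (tech5 (fun n => INR (S n) * y ^ (S n)) N), IHN. cbv beta.
    replace (S N + 2)%nat with (S (N + 2)) by lia.
    replace (S N + 3)%nat with (S (N + 3)) by lia.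
    replace (S N + 1)%nat with (S (N + 1)) by lia.
    replace (N + 3)%nat with (S (N + 2)) by lia.
    replace (N + 2)%nat with (S (N + 1)) by lia.
    replace (N + 1)%nat with (S N) by lia. rewrite !S_INR. simpl pow. field. auto.
Qed.

Lemma psum_cv y : Rabs y < 1 ->
  infinite_sum (fun n => INR (S n) * y ^ (S n)) (y / ((1 - y) * (1 - y))).
Proof.
  intro Hy. assert (y <> 1) by (intro E; subst; rewrite Rabs_R1 in Hy; lra).
  assert (1 - y <> 0) by lra.
  pose proof (n_pow_cv y Hy) as C.
  assert (C2 : Un_cv (fun N => INR (N + 2) * y ^ (N + 2)) 0).
  { intros e He. destruct (C e He) as [K HK]. exists K. intros n Hn. apply HK. lia. }
  assert (C1 : Un_cv (fun N => INR (N + 1) * y ^ (N + 3)) 0).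
  { intros e He. destruct (C e He) as [K HK]. exists K. intros n Hn.
    specialize (HK (n + 1)%nat ltac:(lia)). unfold Rdist in *. rewrite Rminus_0_r in *.
    replace (INR (n + 1) * y ^ (n + 3)) with (y * y * (INR (n + 1) * y ^ (n + 1))).
    2: { replace (n + 3)%nat with (S (S (n + 1))) by lia. simpl. ring. }
    rewrite Rabs_mult. assert (Rabs (y * y) <= 1).
    { rewrite Rabs_mult. pose proof (Rabs_pos y). nra. }
    pose proof (Rabs_pos (INR (n + 1) * y ^ (n + 1))). nra. }
  intros e He.
  assert (Cx : Un_cv (fun N => (y - INR (N + 2) * y ^ (N + 2) + INR (N + 1) * y ^ (N + 3)) / ((1 - y) * (1 - y)))
                (y / ((1 - y) * (1 - y)))).
  { replace (y / ((1 - y) * (1 - y))) with ((y - 0 + 0) * / ((1 - y) * (1 - y))) by (field; auto).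
    apply CV_mult. apply CV_plus. apply CV_minus.
    intros e' He'. exists 0%nat. intros. unfold Rdist. rewrite Rminus_diag, Rabs_R0. lra.
    auto. auto.
    intros e' He'. exists 0%nat. intros. unfold Rdist. rewrite Rminus_diag, Rabs_R0. lra. }
  destruct (Cx e He) as [K HK]. exists K. intros n Hn. rewrite psum_formula by auto. apply HK; auto.
Qed.

Lemma exp_nat n r : exp (INR n * r) = exp r ^ n.
Proof.
  induction n. simpl. rewrite Rmult_0_l. apply exp_0.
  rewrite S_INR. replace ((INR n + 1) * r) with (INR n * r + r) by ring.
  rewrite exp_plus, IHn. simpl. ring.
Qed.

Lemma sum_lin p q f g N :
  sum_f_R0 (fun n => p * f n + q * g n) N = p * sum_f_R0 f N + q * sum_f_R0 g N.
Proof. induction N; simpl. ring. rewrite IHN. ring. Qed.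

Lemma isum_lin p q f g a b : infinite_sum f a -> infinite_sum g b ->
  infinite_sum (fun n => p * f n + q * g n) (p * a + q * b).
Proof.
  intros Hf Hg.
  assert (C : Un_cv (fun N => p * sum_f_R0 f N + q * sum_f_R0 g N) (p * a + q * b)).
  { apply CV_plus.
    - apply (CV_mult (fun _ => p) (sum_f_R0 f)); auto.
      intros e He. exists 0%nat. intros. unfold Rdist. rewrite Rminus_diag, Rabs_R0. lra.
    - apply (CV_mult (fun _ => q) (sum_f_R0 g)); auto.
      intros e He. exists 0%nat. intros. unfold Rdist. rewrite Rminus_diag, Rabs_R0. lra. }
  intros e He. destruct (C e He) as [N HN]. exists N. intros n Hn.
  rewrite sum_lin. apply HN; auto.
Qed.

Lemma isum_ext f g l : (forall n, f n = g n) -> infinite_sum g l -> infinite_sum f l.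
Proof.
  intros E H e He. destruct (H e He) as [N HN]. exists N. intros n Hn.
  rewrite (sum_eq f g n) by (intros; apply E). auto.
Qed.

Section Om.
Variables m k : nat.
Let alpha := INR m / 2 * (Qdim m k - 1).
Let gam := INR k / 2 * (INR k / 2 - 1).
Definition acoef (n : nat) : R := (alpha + gam) * INR n + gam * INR n * (-1) ^ n.

Lemma omega_x r : 0 < r ->
  omega_fun m k r = (alpha + gam) * (exp (- r) / ((1 - exp (- r)) * (1 - exp (- r))))
     + gam * (- exp (- r) / ((1 - - exp (- r)) * (1 - - exp (- r)))).
Proof.
  intro Hr. unfold omega_fun. fold alpha gam.
  set (u := exp (- (r / 2))).
  assert (Hu0 : 0 < u) by apply exp_pos.
  assert (Hu1 : u < 1).
  { unfold u. rewrite <- exp_0. apply exp_increasing. lra. }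
  assert (E1 : exp (- r) = u * u) by (unfold u; rewrite <- exp_plus; f_equal; lra).
  assert (E2 : exp (r / 2) = / u) by (unfold u; rewrite exp_Ropp, Rinv_inv; auto).
  assert (E3 : exp r = / (u * u)) by (rewrite <- E1, exp_Ropp, Rinv_inv; auto).
  unfold sinh. rewrite E1, E2, E3. replace (- (r / 2)) with (- (r/2)) by ring. fold u.
  unfold sinh. try rewrite E2; try rewrite E3; try rewrite E1.
  assert (u * u < 1) by (assert (u * u < u * 1) by (apply Rmult_lt_compat_l; lra); lra).
  assert (0 <= u * u) by (apply Rmult_le_pos; lra).
  assert (1 - u * u <> 0) by lra. assert (1 + u * u <> 0) by lra.
  assert (u <> 0) by lra.
  unfold alpha. field. repeat split; auto; try lra.
  assert (u * u * (u * u) < 1) by (assert (u*u*(u*u) <= u * u * 1) by (apply Rmult_le_compat_l; lra); lra). lra.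
Qed.


Lemma true_series x : 0 < x < 1 ->
  infinite_sum (fun n => acoef (S n) * x ^ (S n))
    ((alpha + gam) * (x / ((1 - x) * (1 - x))) + gam * (- x / ((1 - - x) * (1 - - x)))).
Proof.
  intro Hx.
  apply isum_ext with (fun n => (alpha + gam) * (INR (S n) * x ^ (S n)) + gam * (INR (S n) * (- x) ^ (S n))).
  { intro n. unfold acoef. replace (- x) with (-1 * x) by ring. rewrite Rpow_mult_distr. ring. }
  apply isum_lin; apply psum_cv.
  rewrite Rabs_right; lra. rewrite Rabs_Ropp, Rabs_right; lra.
Qed.

Lemma om_eq om : is_expansion m k om -> forall n, om (S n) = acoef (S n).
Proof.
  intro He.
  assert (forall n, om (S n) - acoef (S n) = 0).
  { apply (coef_unique (fun n => om n - acoef n)).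
    intros x Hx. set (r := - ln x).
    assert (Hr : 0 < r).
    { unfold r. assert (ln x < 0) by (rewrite <- ln_1; apply ln_increasing; lra). lra. }
    assert (Ex : exp (- r) = x) by (unfold r; rewrite Ropp_involutive; apply exp_ln; lra).
    specialize (He r Hr).
    assert (He' : infinite_sum (fun n => om (S n) * x ^ (S n)) (omega_fun m k r)).
    { apply isum_ext with (fun n => om (S n) * exp (- INR (S n) * r)); auto.
      intro n. f_equal. rewrite <- Ex, <- exp_nat. f_equal. ring. }
    pose proof (isum_lin 1 (-1) _ _ _ _ He' (true_series x Hx)) as HL.
    rewrite omega_x, Ex in HL by auto.
    replace 0 with (1 * ((alpha + gam) * (x / ((1 - x) * (1 - x))) + gam * (- x / ((1 - - x) * (1 - - x)))) +
       -1 * ((alpha + gam) * (x / ((1 - x) * (1 - x))) + gam * (- x / ((1 - - x) * (1 - - x))))) by ring.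
    apply isum_ext with (2 := HL). intro n. ring. }
  intro n. specialize (H n). lra.
Qed.

Lemma om_bound om : is_expansion m k om ->
  exists A, 0 < A /\ forall n, (1 <= n)%nat -> Rabs (om n) <= A * INR n.
Proof.
  intro He. exists (Rabs (alpha + gam) + Rabs gam + 1). split.
  { pose proof (Rabs_pos (alpha + gam)). pose proof (Rabs_pos gam). lra. }
  intros n Hn. destruct n as [|n']; [lia|]. rewrite (om_eq om He).
  unfold acoef. eapply Rle_trans. apply Rabs_triang.
  rewrite !Rabs_mult, pow_1_abs, (Rabs_right (INR (S n'))) by (apply Rle_ge, pos_INR).
  assert (0 <= INR (S n')) by apply pos_INR. nra.
Qed.

End Om.

Theorem lemma2p1 (m k : nat) (om : nat -> R) (eps : R) :
  (2 <= m)%nat -> Nat.Even m -> (1 <= k)%nat ->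
  is_expansion m k om ->
  0 < eps < 1 ->
  exists d : R, 0 < d /\
    forall h : nat, exists Cst : R, 0 < Cst /\
      forall (l : nat) (lam : Cplx), (1 <= l)%nat -> ~ Omega eps lam ->
        Cnorm (cderivn h (Gamma om l) lam)
          <= Cst * Rpower (INR l) d * / (1 + Cnorm lam) ^ (h + 1).
Proof.
  intros Hm Hev Hk Hexp Heps.
  destruct (om_bound m k om Hexp) as [A [HA Hom]].
  destruct (INR_unbounded (8 * A / eps)) as [N HN].
  set (D := S N).
  assert (HD : 2 * A <= eps / 4 * INR (S D)).
  { unfold D. rewrite !S_INR.
    assert (8 * A / eps * eps = 8 * A) by (field; lra).
    assert (0 <= INR N) by apply pos_INR. nra. }
  exists (INR D). split. { unfold D; apply lt_0_INR; lia. }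
  intro h. exists (Cs A (eps / 4) h). split. { apply Cs_pos; lra. }
  intros l lam Hl HO.
  pose proof (bound_h om A eps HA Hom Heps D ltac:(unfold D; lia) HD h l lam Hl HO) as B.
  unfold F in B. rewrite Rpower_pow by (apply lt_0_INR; lia).
  rewrite Nat.add_1_r. exact B.
Qed.
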